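(* Let $(G,k)$ be an instance of PITVD, let $S\subseteq V(G)$ be such that $G-S$ is a simple (prop-int, tree)-graph, and let $V_1$ be the set of vertices of the connected components of $G-S$ that contain a cycle. Let $\mathcal{B}$ be the bipartite graph with one side $S$ and the other side the set $\mathcal{C}$ of connected components of $G[V_1]$, where $s\in S$ is adjacent to $D\in\mathcal{C}$ iff $s$ has a neighbor in $D$ in $G$. Suppose $\widehat{S}\subseteq S$ and $\widehat{\mathcal{C}}\subseteq\mathcal{C}$ are non-empty sets such that (i) there is a $3$-expansion of $\widehat{S}$ into $\widehat{\mathcal{C}}$ in $\mathcal{B}$, and (ii) $N_{\mathcal{B}}(\widehat{\mathcal{C}})\subseteq\widehat{S}$. Then $(G,k)$ is a yes-instance of PITVD if and only if $(G-\widehat{S},k-|\widehat{S}|)$ is a yes-instance of PITVD.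
   Context: PITVD: the input is an undirected multigraph $G$ (no self-loops) and an integer $k$; the question is whether there exists $X\subseteq V(G)$ with $|X|\le k$ such that $G-X$ is a simple graph and every connected component of $G-X$ is a proper interval graph or a tree. A simple graph is a (prop-int, tree)-graph if each component is a proper interval graph or a tree. For a bipartite graph with sides $A,B$ and $\widehat{A}\subseteq A$, $\widehat{B}\subseteq B$, a set $M$ of edges is a $q$-expansion of $\widehat{A}$ into $\widehat{B}$ if every vertex of $\widehat{A}$ is incident to exactly $q$ edges of $M$ and exactly $q|\widehat{A}|$ vertices of $\widehat{B}$ are incident to edges of $M$. *)

(* Defs.v *)
From mathcomp Require Import all_boot all_order all_algebra.
Set Implicit Arguments. Unset Strict Implicit. Unset Printing Implicit Defensive.
Import Order.TTheory GRing.Theory Num.Theory.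

(* A multigraph on a finite vertex type T is given by a vertex set
   V : {set T} and an edge-multiplicity function m : T -> T -> nat
   (m x y = number of parallel edges between x and y).  The graph G - X
   is represented by the vertex set V :\: X with the same m. *)

Section Graphs.
Variable T : finType.

Definition induced_rel (V : {set T}) (m : T -> T -> nat) : rel T :=
  [rel x y | [&& x \in V, y \in V & 0 < m x y]].

Definition simple_on (V : {set T}) (m : T -> T -> nat) : Prop :=
  forall x y, x \in V -> y \in V -> m x y <= 1.

Definition component (V : {set T}) (m : T -> T -> nat) (x : T) : {set T} :=
  [set y in V | connect (induced_rel V m) x y].

Definition components (V : {set T}) (m : T -> T -> nat) : {set {set T}} :=
  [set component V m x | x in V].

Definition has_cycle (V : {set T}) (m : T -> T -> nat) : Prop :=
  exists p : seq T,
    [/\ 3 <= size p, uniq p, all (fun v => v \in V) p & cycle (induced_rel V m) p].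

Definition is_tree (V : {set T}) (m : T -> T -> nat) : Prop :=
  (forall x y, x \in V -> y \in V -> connect (induced_rel V m) x y)
  /\ ~ has_cycle V m.

(* the graph induced on V is a proper interval graph: it has an interval model
   (closed intervals [l v, r v], rational endpoints) in which no interval
   properly contains another *)
Definition proper_interval (V : {set T}) (m : T -> T -> nat) : Prop :=
  exists l r : T -> rat,
    [/\ forall v, v \in V -> (l v <= r v)%R,
        forall u v, u \in V -> v \in V -> u != v ->
          (0 < m u v) = ((l u <= r v)%R && (l v <= r u)%R)
      & forall u v, u \in V -> v \in V ->
          ~ [&& (l u <= l v)%R, (r v <= r u)%R & ((l u < l v)%R || (r v < r u)%R)]].

Definition pit_graph (V : {set T}) (m : T -> T -> nat) : Prop :=
  simple_on V m /\
  forall C, C \in components V m -> proper_interval C m \/ is_tree C m.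

Definition pitvd_yes (V : {set T}) (m : T -> T -> nat) (k : int) : Prop :=
  exists X : {set T}, [/\ X \subset V, (Posz #|X| <= k)%R & pit_graph (V :\: X) m].

End Graphs.

(* Main.v *)
Require Import Defs.
From mathcomp Require Import all_boot all_order all_algebra.
From mathcomp Require Import zify.
Set Implicit Arguments. Unset Strict Implicit. Unset Printing Implicit Defensive.
Import Order.TTheory GRing.Theory Num.Theory.

Lemma connect_restrict (T : finType) (e e' : rel T) (P : pred T) x y :
  P x -> (forall z w, P z -> e z w -> P w /\ e' z w) ->
  connect e x y -> connect e' x y /\ P y.
Proof.
move=> Px He /connectP [p pth ->] {y}.
elim: p x Px pth => [|w p IH] x Px /=; first by split.
case/andP=> exw pth.
have [Pw e'xw] := He _ _ Px exw.
have [c Pl] := IH w Pw pth.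
split=> //; exact: connect_trans (connect1 e'xw) c.
Qed.

Lemma induced_sym (T : finType) (A : {set T}) m :
  (forall x y, m x y = m y x) -> symmetric (induced_rel A m).
Proof. by move=> ms x y; rewrite /induced_rel /= ms andbCA. Qed.

Lemma connect_mono (T : finType) (A B : {set T}) m x y : A \subset B ->
  connect (induced_rel A m) x y -> connect (induced_rel B m) x y.
Proof.
move=> sAB c.
have [] // := @connect_restrict _ _ (induced_rel B m) predT x y isT _ c.
move=> z w _ /and3P [zA wA mzw]; split=> //; apply/and3P; split=> //;
  exact: (subsetP sAB).
Qed.

Lemma comp_sub (T : finType) (A : {set T}) m x : component A m x \subset A.
Proof. by apply/subsetP=> y; rewrite inE => /andP[]. Qed.

Lemma comps_sub (T : finType) (A : {set T}) m D :
  D \in components A m -> D \subset A.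
Proof. by case/imsetP=> x _ ->; exact: comp_sub. Qed.

Lemma comp_conn (T : finType) (A : {set T}) m x y z :
  (forall x y, m x y = m y x) ->
  y \in component A m x -> z \in component A m x ->
  connect (induced_rel (component A m x) m) y z.
Proof.
move=> ms; set C := component A m x.
have L : forall y, y \in C -> connect (induced_rel C m) x y.
  move=> y'; rewrite inE => /andP[yA cxy].
  have [] // := @connect_restrict _ (induced_rel A m) (induced_rel C m)
     (fun w => connect (induced_rel A m) x w) x y' (connect0 _ _) _ cxy.
  move=> z' w cxz /and3P[zA wA mzw].
  have exzw : induced_rel A m z' w by apply/and3P.
  have cxw := connect_trans cxz (connect1 exzw).
  split=> //; apply/and3P; split=> //; rewrite inE ?zA ?wA //.
move=> yC zC; have cs := sym_connect_sym (induced_sym C ms).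
by apply: (connect_trans _ (L z zC)); rewrite cs; apply: L.
Qed.

Lemma comp_eq (T : finType) (A : {set T}) m x y :
  (forall x y, m x y = m y x) ->
  y \in component A m x -> component A m y = component A m x.
Proof.
move=> ms; rewrite inE => /andP[yA cxy]; apply/setP=> z; rewrite !inE.
have cs := sym_connect_sym (induced_sym A ms).
apply/andP/andP => [][zA c]; split=> //.
- exact: connect_trans cxy c.
- by apply: (connect_trans _ c); rewrite cs.
Qed.

Lemma comps_disj (T : finType) (A : {set T}) m D D' v :
  (forall x y, m x y = m y x) ->
  D \in components A m -> D' \in components A m -> v \in D -> v \in D' -> D = D'.
Proof.
move=> ms /imsetP[a _ ->] /imsetP[b _ ->] vD vD'.
by rewrite -(comp_eq ms vD) (comp_eq ms vD').
Qed.

Lemma comp_edge (T : finType) (A : {set T}) m D z w :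
  D \in components A m -> z \in D -> w \in A -> 0 < m z w -> w \in D.
Proof.
case/imsetP=> a _ ->; rewrite !inE => /andP[zA c] wA mzw; rewrite wA /=.
by apply: connect_trans c (connect1 _); apply/and3P.
Qed.

Lemma has_cycle_mono (T : finType) (A B : {set T}) m :
  A \subset B -> has_cycle A m -> has_cycle B m.
Proof.
move=> sAB [p [sz up ap cp]]; exists p; split=> //.
- by apply/allP=> v /(allP ap) vA; exact: (subsetP sAB).
- apply: sub_cycle cp => x y /and3P[xA yA mxy]; apply/and3P; split=> //;
  exact: (subsetP sAB).
Qed.

Lemma pit_hered (T : finType) (C C' : {set T}) m : C \subset C' ->
  (forall x y, x \in C -> y \in C -> connect (induced_rel C m) x y) ->
  proper_interval C' m \/ is_tree C' m -> proper_interval C m \/ is_tree C m.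
Proof.
move=> sC Hc [[l [r [H1 H2 H3]]]|[_ nc]].
- left; exists l, r; split.
  + by move=> v vC; apply: H1; apply: (subsetP sC).
  + by move=> u v uC vC; apply: H2; apply: (subsetP sC).
  + by move=> u v uC vC; apply: H3; apply: (subsetP sC).
- right; split=> // hc; apply: nc; exact: has_cycle_mono sC hc.
Qed.

Lemma claw_pi (T : finType) (C : {set T}) m c a b d :
  proper_interval C m -> c \in C -> a \in C -> b \in C -> d \in C ->
  c != a -> c != b -> c != d -> a != b -> b != d -> a != d ->
  0 < m c a -> 0 < m c b -> 0 < m c d ->
  m a b = 0 -> m b d = 0 -> m a d = 0 -> False.
Proof.
case=> l [r [H1 H2 H3]] cC aC bC dC ca cb cd ab bd ad mca mcb mcd mab mbd mad.
have adj u (uC : u \in C) (cu : c != u) (mcu : 0 < m c u) :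
    (l c <= r u)%R /\ (l u <= r c)%R.
  by move: (H2 c u cC uC cu); rewrite mcu => /esym/andP.
have dis u v (uC : u \in C) (vC : v \in C) (uv : u != v) (muv : m u v = 0) :
    (r u < l v)%R \/ (r v < l u)%R.
  move: (H2 u v uC vC uv); rewrite muv ltnn => /esym/negbT.
  by rewrite negb_and -!ltNge => /orP[]; [right|left].
have mid u v w : u \in C -> v \in C -> w \in C -> c != u -> c != v -> c != w ->
    0 < m c u -> 0 < m c v -> 0 < m c w -> (r u < l v)%R -> (r v < l w)%R -> False.
  move=> uC vC wC cu cv cw mu mv mw h1 h2.
  have [h3 _] := adj u uC cu mu; have [_ h4] := adj w wC cw mw.
  have lt1 : (l c < l v)%R by apply: le_lt_trans h3 h1.
  have lt2 : (r v < r c)%R by apply: lt_le_trans h2 h4.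
  by apply: (H3 c v cC vC); rewrite (ltW lt1) (ltW lt2) lt1.
case: (dis a b aC bC ab mab) => h1; case: (dis b d bC dC bd mbd) => h2;
  case: (dis a d aC dC ad mad) => h3;
  by [apply: (mid a b d) | apply: (mid a d b) | apply: (mid d a b)
     | apply: (mid b a d) | apply: (mid b d a) | apply: (mid d b a)].
Qed.
Theorem lemma33 (T : finType) (V : {set T}) (m : T -> T -> nat) (k : int)
  (msym : forall x y, m x y = m y x) (mloop : forall x, m x x = 0%N)
  (S : {set T}) (HSV : S \subset V) (HGS : pit_graph (V :\: S) m)
  (V1 : {set T})
  (HV1 : forall v, v \in V1 <->
     exists D, [/\ D \in components (V :\: S) m, v \in D & has_cycle D m])
  (Shat : {set T}) (Chat : {set {set T}}) :
  Shat \subset S -> Chat \subset components V1 m ->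
  Shat != set0 -> Chat != set0 ->
  (exists M : {set T * {set T}},
     [/\ forall e, e \in M ->
           [&& e.1 \in Shat, e.2 \in Chat & [exists v in e.2, 0 < m e.1 v]],
         forall s, s \in Shat -> #|[set e in M | e.1 == s]| = 3
       & #|[set D in Chat | [exists e in M, e.2 == D]]| = 3 * #|Shat|]) ->
  (forall s D, s \in S -> D \in Chat -> [exists v in D, 0 < m s v] -> s \in Shat) ->
  pitvd_yes V m k <-> pitvd_yes (V :\: Shat) m (k - Posz #|Shat|)%R.
Proof.
move=> sShS sChV1 Sh0 Ch0 [M [HM1 HM2 HM3]] Hii.
have sShV := subset_trans sShS HSV.
split; last first.
  case=> X' [sX' hk hp]; exists (X' :|: Shat); split.
  - by rewrite subUset sShV (subset_trans sX') ?subsetDl.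
  - have h := leq_card_setU X' Shat; move: h hk; rewrite /leqif => -[h _]. lia.
  - by rewrite setUC -setDDl.
case=> X [sXV hk [hsimp hcomp]].
have [hsimpS hcompS] := HGS.
pose W := \bigcup_(D in Chat) D.
have V1sub : V1 \subset V :\: S.
  by apply/subsetP=> v /HV1 [D [Dc vD _]]; exact: (subsetP (comps_sub Dc)).
have ChC D : D \in Chat -> D \in components V1 m by move/(subsetP sChV1).
have ChV1 D : D \in Chat -> D \subset V1 by move/ChC/comps_sub.
have Wsub : W \subset V1.
  by apply/subsetP=> v /bigcupP [D DC vD]; exact: (subsetP (ChV1 D DC)).
have WVS : W \subset V :\: S := subset_trans Wsub V1sub.
have inW D v : D \in Chat -> v \in D -> v \in W by move=> DC vD; apply/bigcupP; exists D.
have V1close z w : z \in V1 -> w \in V :\: S -> 0 < m z w -> w \in V1.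
  move=> /HV1 [D [Dc zD cyc]] wVS mzw; apply/HV1; exists D; split=> //.
  exact: comp_edge Dc zD wVS mzw.
have Chdisj D D' v : D \in Chat -> D' \in Chat -> v \in D -> v \in D' -> D = D'.
  by move=> DC D'C; apply: comps_disj msym (ChC _ DC) (ChC _ D'C).
have mixed z w : z \in W -> w \in V :\: Shat -> w \notin W -> m z w = 0.
  move=> zW wV wW; have /bigcupP[D DC zD] := zW.
  apply/eqP; rewrite eqn0Ngt; apply/negP=> mzw.
  have zV1 : z \in V1 := subsetP Wsub z zW.
  case: (boolP (w \in S)) => wS.
  - have := Hii w D wS DC (introT existsP (ex_intro _ z _)).
    rewrite zD msym mzw => /(_ isT) wSh.
    by move: wV; rewrite inE wSh.
  - have wVS: w \in V :\: S by move: wV; rewrite !inE wS => /andP[].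
    have wV1 := V1close z w zV1 wVS mzw.
    have wD := comp_edge (ChC _ DC) zD wV1 mzw.
    by rewrite (inW D w DC wD) in wW.
have Msnd : {in M &, injective snd}.
  have e1 : snd @: M = [set D in Chat | [exists e in M, e.2 == D]].
    apply/setP=> D; rewrite inE; apply/imsetP/andP =>
      [[e eM ->]|[DC /existsP[e /andP[eM /eqP <-]]]].
    - split; first by case/and3P: (HM1 e eM).
      by apply/existsP; exists e; rewrite eM eqxx.
    - by exists e.
  have cM : #|M| = 3 * #|Shat|.
    rewrite -sum1_card (partition_big (fun e : T * {set T} => e.1) (mem Shat)).
      rewrite mulnC -sum_nat_const; apply: eq_bigr => s sSh.
      by rewrite sum1dep_card -(HM2 s sSh).
    by move=> e /HM1 /and3P[].
  by apply/imset_injP; rewrite eqn_leq leq_imset_card e1 HM3 cM leqnn.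
have key s : s \in Shat -> s \notin X ->
    [exists e in M, (e.1 == s) && [exists v in e.2, v \in X]].
  move=> sSh sX; apply: contraT => /existsPn H.
  have sV : s \in V := subsetP sShV s sSh.
  have sVX : s \in V :\: X by rewrite inE sX sV.
  have get e : e \in [set e in M | e.1 == s] -> exists v,
      [/\ e.2 \in Chat, v \in e.2, 0 < m s v & e.2 \subset V :\: X].
    rewrite inE => /andP[eM /eqP es].
    case/and3P: (HM1 e eM) => _ eC /existsP[v /andP[ve mv]].
    exists v; split=> //; first by rewrite -es.
    apply/subsetP=> y ye; rewrite inE.
    have := H e; rewrite eM es eqxx /= => /existsPn /(_ y); rewrite ye /= => ->.
    have := subsetP (ChV1 _ eC) y ye => /(subsetP V1sub); rewrite inE => /andP[_ ->].
    by [].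
  have: 2 < #|[set e in M | e.1 == s]| by rewrite HM2.
  case/card_gt2P => [e1 [e2 [e3 [[i1 i2 i3] [n12 n23 n31]]]]].
  have [v1 [D1C v1D m1 sD1]] := get e1 i1.
  have [v2 [D2C v2D m2 sD2]] := get e2 i2.
  have [v3 [D3C v3D m3 sD3]] := get e3 i3.
  have iM e : e \in [set e in M | e.1 == s] -> e \in M by rewrite inE => /andP[].
  have neD e e' : e \in [set e in M | e.1 == s] -> e' \in [set e in M | e.1 == s] ->
     e != e' -> e.2 != e'.2.
    by move=> ie ie' nee; apply: contra nee => /eqP h; apply/eqP; apply: Msnd h; apply: iM.
  have d12 := neD _ _ i1 i2 n12.
  have d23 := neD _ _ i2 i3 n23.
  have d31 := neD _ _ i3 i1 n31.
  have nv D D' v v' : D \in Chat -> D' \in Chat -> D != D' -> v \in D -> v' \in D' -> v != v'.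
    by move=> DC D'C nD vD v'D; apply: contra nD => /eqP h; subst v'; apply/eqP; apply: Chdisj vD v'D.
  have mv D D' v v' : D \in Chat -> D' \in Chat -> D != D' -> v \in D -> v' \in D' -> m v v' = 0.
    move=> DC D'C nD vD v'D; apply/eqP; rewrite eqn0Ngt; apply/negP => mvv.
    have v'V1 : v' \in V1 := subsetP (ChV1 _ D'C) v' v'D.
    have := comp_edge (ChC _ DC) vD v'V1 mvv => v'D2.
    by move/eqP: nD; apply; apply: Chdisj v'D2 v'D.
  have sv D v : D \in Chat -> v \in D -> s != v.
    move=> DC vD; apply/eqP => sv; subst v.
    have := subsetP V1sub s (subsetP (ChV1 _ DC) s vD).
    by rewrite inE (subsetP sShS s sSh).
  pose C := component (V :\: X) m s.
  have CC : C \in components (V :\: X) m by apply: imset_f.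
  have inC D v : D \in Chat -> D \subset V :\: X -> v \in D -> 0 < m s v -> v \in C.
    move=> DC sD vD msv; rewrite inE (subsetP sD v vD) /=.
    by apply: connect1; apply/and3P; split=> //; apply: (subsetP sD v vD).
  have sC : s \in C by rewrite inE sVX connect0.
  exfalso; case: (hcomp C CC) => [pi|[_ nc]].
  - apply: (claw_pi pi sC (inC _ _ D1C sD1 v1D m1) (inC _ _ D2C sD2 v2D m2)
       (inC _ _ D3C sD3 v3D m3)); rewrite ?m1 ?m2 ?m3 //.
    + exact: sv v1D.
    + exact: sv v2D.
    + exact: sv v3D.
    + exact: nv v1D v2D.
    + exact: nv v2D v3D.
    + by rewrite eq_sym in d31; exact: nv v1D v3D.
    + exact: mv v1D v2D.
    + exact: mv v2D v3D.
    + by rewrite eq_sym in d31; exact: mv v1D v3D.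
  - apply: nc.
    have v1V1 : v1 \in V1 := subsetP (ChV1 _ D1C) v1 v1D.
    have [D' [D'c v1D' cyc]] := (HV1 v1).1 v1V1.
    apply: has_cycle_mono cyc; apply/subsetP => y yD'.
    have c1 : connect (induced_rel (V :\: S) m) v1 y.
      move: D'c v1D' yD'; case/imsetP => b _ -> v1D' yD'.
      exact: connect_mono (comp_sub _ _ _) (comp_conn msym v1D' yD').
    have hcl : forall z w, z \in e1.2 -> induced_rel (V :\: S) m z w ->
        w \in e1.2 /\ induced_rel (V :\: X) m z w.
      move=> z w zD /and3P[zVS wVS mzw].
      have wV1 := V1close z w (subsetP (ChV1 _ D1C) z zD) wVS mzw.
      have wD := comp_edge (ChC _ D1C) zD wV1 mzw.
      by split=> //; apply/and3P; split=> //; apply: (subsetP sD1).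
    have [c2 yD1] := @connect_restrict _ (induced_rel (V :\: S) m)
        (induced_rel (V :\: X) m) (mem e1.2) v1 y v1D hcl c1.
    rewrite inE (subsetP sD1 y yD1) /=.
    apply: connect_trans c2; apply: connect1.
    by apply/and3P; split=> //; apply: (subsetP sD1 v1 v1D).
pose P s v := [exists e in M, (e.1 == s) && (v \in e.2)] && (v \in X).
pose f s := odflt s [pick v | P s v].
have fP s : s \in Shat -> s \notin X ->
    exists2 e, e \in M & [&& e.1 == s, f s \in e.2 & f s \in X].
  move=> sSh sX; rewrite /f; case: pickP =>
    [v /andP[/existsP[e /andP[eM /andP[es ve]]] vX] | none].
  - by exists e => //=; rewrite es ve vX.
  - exfalso.
    have /existsP[e /andP[eM /andP[es /existsP[v /andP[ve vX]]]]] := key s sSh sX.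
    move: (none v); rewrite /P vX andbT => /negbT/existsPn/(_ e).
    by rewrite eM es ve.
have WS v : v \in W -> v \notin Shat.
  move=> /(subsetP WVS); rewrite inE => /andP[vS _]; apply: contra vS.
  exact: (subsetP sShS).
have cnt : #|Shat :\: X| <= #|X :&: W|.
  rewrite -(card_in_imset (f:=f)); last first.
    move=> s s' /setDP[sSh sX] /setDP[s'Sh s'X] fe.
    have [e eM /and3P[/eqP es fe1 _]] := fP s sSh sX.
    have [e' e'M /and3P[/eqP e's fe2 _]] := fP s' s'Sh s'X.
    rewrite fe in fe1.
    have eC : e.2 \in Chat by case/and3P: (HM1 e eM).
    have e'C : e'.2 \in Chat by case/and3P: (HM1 e' e'M).
    have := Chdisj _ _ _ eC e'C fe1 fe2 => /(Msnd _ _ eM e'M) ee.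
    by rewrite -es -e's ee.
  apply: subset_leq_card; apply/subsetP => v /imsetP[s /setDP[sSh sX] ->].
  have [e eM /and3P[_ fe fX]] := fP s sSh sX.
  rewrite inE fX /=; apply: (inW e.2) => //; by case/and3P: (HM1 e eM).
exists (X :\: (Shat :|: W)); split.
- apply/subsetP => v /setDP[vX]; rewrite inE negb_or => /andP[vSh _].
  by rewrite inE vSh (subsetP sXV v vX).
- have e1 := cardsID Shat X.
  have e2 := cardsID X Shat.
  have e3 := cardsID W (X :\: Shat).
  rewrite setDDl in e3.
  have e4 : #|X :&: W| <= #|(X :\: Shat) :&: W|.
    apply: subset_leq_card; apply/subsetP => v /setIP[vX vW].
    by rewrite !inE vX vW WS.
  rewrite setIC in e2. lia.
set U := V :\: Shat :\: (X :\: (Shat :|: W)).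
have Ucase x : x \in U -> x \notin W -> x \in V :\: X.
  move=> /setDP[/setDP[xV xSh] nX'] xW; rewrite inE xV andbT.
  apply: contra nX' => xX; rewrite inE xX andbT inE negb_or xSh.
  exact: xW.
have WU x : x \in W -> x \in U.
  move=> xW; apply/setDP; split; [apply/setDP; split|].
  - by move: (subsetP WVS x xW); rewrite inE => /andP[].
  - exact: WS.
  - by apply/negP => /setDP[_]; rewrite inE xW orbT.
have UVSh x : x \in U -> x \in V :\: Shat by case/setDP.
split.
- move=> x y xU yU.
  case: (boolP (x \in W)) => xW; case: (boolP (y \in W)) => yW.
  + by apply: hsimpS; apply: (subsetP WVS).
  + by rewrite (mixed x y xW (UVSh y yU) yW).
  + by rewrite msym (mixed y x yW (UVSh x xU) xW).
  + by apply: hsimp; apply: Ucase.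
- move=> C /imsetP[x xU ->].
  case: (boolP (x \in W)) => xW.
  + apply: (@pit_hered _ _ (component (V :\: S) m x)).
    * apply/subsetP => y; rewrite inE => /andP[yU cxy].
      have hcl : forall z w, z \in W -> induced_rel U m z w ->
          w \in W /\ induced_rel (V :\: S) m z w.
        move=> z w zW /and3P[zU wU mzw].
        have wW : w \in W.
          by apply: contraT => wW; move: mzw; rewrite (mixed z w zW (UVSh w wU) wW).
        by split=> //; apply/and3P; split=> //; apply: (subsetP WVS).
      have [c yW] := @connect_restrict _ _ _ (mem W) x y xW hcl cxy.
      by rewrite inE (subsetP WVS y yW) c.
    * by move=> y z; apply: comp_conn.
    * by apply: hcompS; apply: imset_f; exact: (subsetP WVS).
  + apply: (@pit_hered _ _ (component (V :\: X) m x)).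
    * apply/subsetP => y; rewrite inE => /andP[yU cxy].
      have hcl : forall z w, z \in [pred z | z \notin W] -> induced_rel U m z w ->
          w \in [pred z | z \notin W] /\ induced_rel (V :\: X) m z w.
        move=> z w; rewrite !inE => zW /and3P[zU wU mzw].
        have wW : w \notin W.
          apply/negP => wW; move: mzw.
          by rewrite msym (mixed w z wW (UVSh z zU) zW).
        by split=> //; apply/and3P; split=> //; apply: Ucase.
      have [c yW] := @connect_restrict _ _ _ [pred z | z \notin W] x y xW hcl cxy.
      by rewrite inE (Ucase y yU yW) c.
    * by move=> y z; apply: comp_conn.
    * by apply: hcomp; apply: imset_f; exact: Ucase.
Qed.
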